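(* Let $R$ be a QNA with Goodearl–Yakimov elements $y_1,\ldots,y_N$, let $j\in[1,N]$, $r\in R_j$ and $w\in R$ with $rw\in y_jR$. If $r\notin y_jR_j$, then $w\in y_jR$.
   Context: ${\mathbb K}$ is a field of characteristic $0$. A quantum nilpotent algebra (QNA) is an iterated Ore extension $R={\mathbb K}[x_1][x_2;\sigma_2,\delta_2]\cdots[x_N;\sigma_N,\delta_N]$, where $R_k={\mathbb K}[x_1][x_2;\sigma_2,\delta_2]\cdots[x_k;\sigma_k,\delta_k]$ ($R_0={\mathbb K}$), $\sigma_k$ is a ${\mathbb K}$-automorphism and $\delta_k$ a $\sigma_k$-derivation of $R_{k-1}$, together with a torus $\mathcal H$ acting rationally by ${\mathbb K}$-automorphisms on $R$ with each $x_i$ an $\mathcal H$-eigenvector, such that: (i) $\sigma_k(x_j)=\lambda_{kj}x_j$ for $j<k$, with $\lambda_{kj}\in{\mathbb K}^*$; (ii) $\delta_k$ is locally nilpotent on $R_{k-1}$; (iii) for each $k$ there exist $h_k\in\mathcal H$ and $q_k\in{\mathbb K}^*$ not a root of unity such that $h_k$ acts on $R_{k-1}$ as $\sigma_k$ and $h_k\cdot x_k=q_kx_k$. The rank is $n=|\{k:\delta_k=0\}|$ and $\mathcal H=({\mathbb K}^* )^n$ is taken maximal. Homogeneous elements are the $\mathcal H$-eigenvectors. An element $u$ is normal if $uR=Ru$; a prime element is a nonzero normal $p$ with $pR$ a completely prime ideal. Goodearl–Yakimov elements: there is a surjective map $\mu:[1,N]\to[1,n]$ with predecessor $p(k)=\max\{j<k:\mu(j)=\mu(k)\}$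 (or $-\infty$ if none) and successor $s(k)=\min\{j>k:\mu(j)=\mu(k)\}$ (or $+\infty$ if none), and homogeneous elements $y_1,\ldots,y_N\in R$, uniquely determined, with $y_k=x_k$ if $p(k)=-\infty$ and $y_k=y_{p(k)}x_k-c_k$ for some $c_k\in R_{k-1}$ otherwise, such that for every $k$ the set $\{y_j: j\le k,\ s(j)>k\}$ is, up to nonzero scalars, the set of homogeneous prime elements of $R_k$. Note $y_j\in R_j$. The $y_i$ pairwise quasi-commute. *)

(* Defs.v *)
From HB Require Import structures.
From mathcomp Require Import all_boot all_order all_algebra.
Set Implicit Arguments. Unset Strict Implicit. Unset Printing Implicit Defensive.
Import Order.TTheory GRing.Theory Num.Theory.
Local Open Scope ring_scope.

Section QNA.
Variables (K : fieldType) (R : algType K) (x : nat -> R).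

(* R_k : the subalgebra K[x_1][x_2;s_2,d_2]...[x_k;s_k,d_k], i.e. R_0 = K
   and R_k = { sum_i r_i x_k^i : r_i in R_(k-1) } *)
Fixpoint inR (k : nat) (r : R) : Prop :=
  match k with
  | 0 => exists c : K, r = c%:A
  | k'.+1 => exists s : seq R, (forall i, (i < size s)%N -> inR k' s`_i) /\
               r = \sum_(i < size s) s`_i * x k'.+1 ^+ i
  end.

Definition is_Kaut_on (k : nat) (sigma : R -> R) : Prop :=
  (forall a, inR k a -> inR k (sigma a)) /\
  (forall a b, inR k a -> inR k b -> sigma (a + b) = sigma a + sigma b) /\
  (forall a b, inR k a -> inR k b -> sigma (a * b) = sigma a * sigma b) /\
  (forall (c : K) a, inR k a -> sigma (c *: a) = c *: sigma a) /\
  sigma 1 = 1 /\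
  (forall a b, inR k a -> inR k b -> sigma a = sigma b -> a = b) /\
  (forall b, inR k b -> exists2 a, inR k a & sigma a = b).

Definition is_sigma_der_on (k : nat) (sigma delta : R -> R) : Prop :=
  (forall a, inR k a -> inR k (delta a)) /\
  (forall a b, inR k a -> inR k b -> delta (a + b) = delta a + delta b) /\
  (forall (c : K) a, inR k a -> delta (c *: a) = c *: delta a) /\
  (forall a b, inR k a -> inR k b ->
        delta (a * b) = sigma a * delta b + delta a * b).

(* R_k = R_(k-1)[x_k; sigma, delta] (Ore extension): commutation rule and
   R_k is a free left R_(k-1)-module on the powers of x_k *)
Definition is_Ore_step (k : nat) (sigma delta : R -> R) : Prop :=
  is_Kaut_on k.-1 sigma /\
  is_sigma_der_on k.-1 sigma delta /\
  (forall r, inR k.-1 r -> x k * r = sigma r * x k + delta r) /\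
  (forall s : seq R, (forall i, (i < size s)%N -> inR k.-1 s`_i) ->
        \sum_(i < size s) s`_i * x k ^+ i = 0 ->
        forall i, (i < size s)%N -> s`_i = 0).

Definition delta_zero (k : nat) (delta : R -> R) : Prop :=
  forall r, inR k.-1 r -> delta r = 0.

(* the torus H = (Kx)^n (Kx = nonzero scalars), elements h : 'I_n -> K with nonzero entries *)
Definition in_torus (n : nat) (h : 'I_n -> K) : Prop := forall i, h i != 0.

Definition not_root_of_unity (q : K) : Prop :=
  forall m : nat, (0 < m)%N -> q ^+ m != 1.

Definition is_QNA (N n : nat) (sigma delta : nat -> R -> R)
    (act : ('I_n -> K) -> R -> R) : Prop :=
  (forall r, inR N r) /\
  (forall k, (1 <= k <= N)%N -> is_Ore_step k (sigma k) (delta k)) /\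
  (forall k j, (1 <= j)%N -> (j < k <= N)%N ->
        exists2 lam : K, lam != 0 & sigma k (x j) = lam *: x j) /\
  (forall k, (1 <= k <= N)%N -> forall r, inR k.-1 r ->
        exists m : nat, iter m (delta k) r = 0) /\
  (exists2 l : seq nat, uniq l /\ size l = n &
        forall k, k \in l <-> ((1 <= k <= N)%N /\ delta_zero k (delta k))) /\
  (forall h, in_torus h ->
        (forall a b, act h (a + b) = act h a + act h b) /\
        (forall a b, act h (a * b) = act h a * act h b) /\
        (forall (c : K) a, act h (c *: a) = c *: act h a) /\
        act h 1 = 1 /\ bijective (act h)) /\
  (exists e : nat -> 'I_n -> int, forall i, (1 <= i <= N)%N ->
        forall h, in_torus h -> act h (x i) = (\prod_(l < n) h l ^ e i l) *: x i) /\
  (forall h, in_torus h -> (forall r, act h r = r) -> forall l, h l = 1) /\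
  (forall k, (1 <= k <= N)%N -> exists h, exists q : K,
        in_torus h /\ q != 0 /\ not_root_of_unity q /\
        (forall r, inR k.-1 r -> act h r = sigma k r) /\
        act h (x k) = q *: x k).

Definition homogeneous (n : nat) (act : ('I_n -> K) -> R -> R) (u : R) : Prop :=
  u != 0 /\ forall h, in_torus h -> exists c : K, act h u = c *: u.

Definition in_ideal (k : nat) (u a : R) : Prop := exists2 t, inR k t & a = u * t.

Definition prime_elt (k : nat) (u : R) : Prop :=
  inR k u /\ u != 0 /\
  (forall r, inR k r -> exists2 r', inR k r' & u * r = r' * u) /\
  (forall r, inR k r -> exists2 r', inR k r' & r * u = u * r') /\
  ~ in_ideal k u 1 /\
  (forall a b, inR k a -> inR k b -> in_ideal k u (a * b) ->
        in_ideal k u a \/ in_ideal k u b).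

End QNA.

(* predecessor p(k) = max{j < k : mu j = mu k} (None = -oo) *)
Definition gy_pred (mu : nat -> nat) (k : nat) : option nat :=
  let l := [seq j <- iota 1 k.-1 | mu j == mu k] in
  if l is [::] then None else Some (last 0%N l).

(* successor s(k) = min{j > k : mu j = mu k}, j <= N (None = +oo) *)
Definition gy_succ (N : nat) (mu : nat -> nat) (k : nat) : option nat :=
  let l := [seq j <- iota k.+1 (N - k) | mu j == mu k] in
  if l is j :: _ then Some j else None.

Definition succ_gt (N : nat) (mu : nat -> nat) (j k : nat) : bool :=
  if gy_succ N mu j is Some m then (k < m)%N else true.

Definition is_GY (K : fieldType) (R : algType K) (x : nat -> R) (N n : nat)
    (act : ('I_n -> K) -> R -> R) (mu : nat -> nat) (y : nat -> R) : Prop :=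
  (forall k, (1 <= k <= N)%N -> (1 <= mu k <= n)%N) /\
  (forall l, (1 <= l <= n)%N -> exists2 k, (1 <= k <= N)%N & mu k = l) /\
  (forall k, (1 <= k <= N)%N -> homogeneous act (y k)) /\
  (forall k, (1 <= k <= N)%N ->
        match gy_pred mu k with
        | None => y k = x k
        | Some p => exists2 c, inR x k.-1 c & y k = y p * x k - c
        end) /\
  (forall k, (1 <= k <= N)%N ->
        (forall j, (1 <= j <= k)%N -> succ_gt N mu j k ->
           homogeneous act (y j) /\ prime_elt x k (y j)) /\
        (forall u, homogeneous act u -> prime_elt x k u ->
           exists j, (1 <= j <= k)%N /\ succ_gt N mu j k /\
             exists2 c : K, c != 0 & u = c *: y j)).

(* Main.v *)
Require Import Defs.
From HB Require Import structures.
From mathcomp Require Import all_boot all_order all_algebra.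
Import GRing.Theory.
Local Open Scope ring_scope.

Section Helpers.
Set Implicit Arguments.
Import GRing.Theory.
Variables (K : fieldType) (R : algType K) (x : nat -> R).

Lemma pad (F : nat -> R) m M : (m <= M)%N -> (forall i, (m <= i)%N -> F i = 0) ->
  \sum_(i < m) F i = \sum_(i < M) F i.
Proof.
elim: M => [|M IH] hm hF; first by move: hm; rewrite leqn0 => /eqP->.
case: (leqP m M) => h.
  by rewrite big_ord_recr /= -IH // hF // addr0.
have -> : m = M.+1 by apply/eqP; rewrite eqn_leq hm h.
by [].
Qed.

Lemma padF k (f : nat -> R) m M : (m <= M)%N -> (forall i, (m <= i)%N -> f i = 0) ->
  \sum_(i < m) f i * x k ^+ i = \sum_(i < M) f i * x k ^+ i.
Proof. move=> hm hf; apply: (@pad (fun i => f i * x k ^+ i)) => // i hi.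
by rewrite hf // mul0r. Qed.

Lemma inRS_fun k m (f : nat -> R) : (forall i, (i < m)%N -> inR x k (f i)) ->
  inR x k.+1 (\sum_(i < m) f i * x k.+1 ^+ i).
Proof.
move=> hf; exists (mkseq f m); split.
  by move=> i; rewrite size_mkseq => hi; rewrite nth_mkseq //; apply hf.
by rewrite size_mkseq; apply: eq_bigr => i _; rewrite nth_mkseq ?ltn_ord.
Qed.

Lemma inR0 k : inR x k 0.
Proof.
elim: k => [|k IH]; first by exists 0; rewrite scale0r.
by exists [::]; split => //=; rewrite big_ord0.
Qed.

Lemma inRS_inv k a : inR x k.+1 a -> exists m (f : nat -> R),
  (forall i, inR x k (f i)) /\ (forall i, (m <= i)%N -> f i = 0) /\
  a = \sum_(i < m) f i * x k.+1 ^+ i.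
Proof.
case=> s [hs ->]; exists (size s), (fun i => s`_i); split; last split => //.
  move=> i; case: (ltnP i (size s)) => h; first exact: hs.
  by rewrite nth_default //; apply: inR0.
by move=> i hi; apply: nth_default.
Qed.

Lemma inR_mono k a : inR x k a -> inR x k.+1 a.
Proof.
move=> ha; exists [:: a]; split; first by move=> [|i] //= _.
by rewrite big_ord1 /= expr0 mulr1.
Qed.

Lemma inR_monoP j k a : (j <= k)%N -> inR x j a -> inR x k a.
Proof.
move=> hjk ha; elim: k hjk => [|k IH]; first by rewrite leqn0 => /eqP <-.
rewrite leq_eqVlt ltnS => /orP [/eqP <- // | h]; exact: inR_mono (IH h).
Qed.

Lemma inR_add k a b : inR x k a -> inR x k b -> inR x k (a + b).
Proof.
elim: k a b => [|k IH] a b.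
  by case=> c -> [d ->]; exists (c + d); rewrite scalerDl.
move=> /inRS_inv [m [f [hf [hf0 ->]]]] /inRS_inv [m' [g [hg [hg0 ->]]]].
rewrite (@padF _ _ _ (maxn m m') _ hf0) ?leq_maxl //.
rewrite (@padF _ _ _ (maxn m m') _ hg0) ?leq_maxr //.
rewrite -big_split /=.
under eq_bigr do rewrite -mulrDl.
by apply: (@inRS_fun _ _ (fun i => f i + g i)) => i _; apply: IH.
Qed.

Lemma inR_opp k a : inR x k a -> inR x k (- a).
Proof.
elim: k a => [|k IH] a.
  by case=> c ->; exists (- c); rewrite scaleNr.
move=> /inRS_inv [m [f [hf [hf0 ->]]]].
rewrite -sumrN.
under eq_bigr do rewrite -mulNr.
by apply: (@inRS_fun _ _ (fun i => - f i)) => i _; apply: IH.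
Qed.

Lemma inR_mon k c i : inR x k c -> inR x k.+1 (c * x k.+1 ^+ i).
Proof.
move=> hc.
have := @inRS_fun k i.+1 (fun l => if l == i then c else 0).
rewrite big_ord_recr /= eqxx big1 ?add0r.
  apply => l _; case: ifP => _ //; exact: inR0.
move=> l _; rewrite ifN ?mul0r //.
by rewrite neq_ltn ltn_ord.
Qed.

Lemma inR_sum k (I : Type) (rr : seq I) (P : pred I) (F : I -> R) :
  (forall i, P i -> inR x k (F i)) -> inR x k (\sum_(i <- rr | P i) F i).
Proof.
move=> hF; apply: (big_ind (inR x k)); [exact: inR0 | exact: inR_add | exact: hF].
Qed.

Variables (N : nat) (sigma delta : nat -> R -> R).
Hypothesis Hore : forall k, (1 <= k <= N)%N -> is_Ore_step x k (sigma k) (delta k).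

Lemma inR_mul k : (k <= N)%N -> forall a b, inR x k a -> inR x k b -> inR x k (a * b).
Proof.
elim: k => [|k IH] hk a b.
  by case=> c -> [d ->]; exists (c * d); rewrite -scalerAl mul1r scalerA.
have IHk := IH (ltnW hk).
have [Haut [Hder [Hcomm Hfree]]] := Hore k.+1 hk.
have Hsig : forall a, inR x k a -> inR x k (sigma k.+1 a) := Haut.1.
have Hdel : forall a, inR x k a -> inR x k (delta k.+1 a) := Hder.1.
have Hc : forall r, inR x k r -> x k.+1 * r = sigma k.+1 r * x k.+1 + delta k.+1 r := Hcomm.
have XM : forall b, inR x k.+1 b -> inR x k.+1 (x k.+1 * b).
  move=> b' /inRS_inv [m [f [hf [hf0 ->]]]].
  rewrite mulr_sumr; apply: inR_sum => i _.
  rewrite mulrA (Hc _ (hf i)) mulrDl -mulrA -exprS.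
  by apply: inR_add; apply: inR_mon; [apply: Hsig | apply: Hdel].
have XPM : forall i b, inR x k.+1 b -> inR x k.+1 (x k.+1 ^+ i * b).
  elim=> [|i IHi] b' hb; first by rewrite expr0 mul1r.
  by rewrite exprS -mulrA; apply: XM; apply: IHi.
have LM : forall a b, inR x k a -> inR x k.+1 b -> inR x k.+1 (a * b).
  move=> a' b' ha /inRS_inv [m [f [hf [hf0 ->]]]].
  rewrite mulr_sumr; apply: inR_sum => i _.
  by rewrite mulrA; apply: inR_mon; apply: IHk.
move=> /inRS_inv [m [g [hg [hg0 ->]]]] hb.
rewrite mulr_suml; apply: inR_sum => i _.
by rewrite -mulrA; apply: LM => //; apply: XPM.
Qed.

End Helpers.

Theorem lemmaA1 (K : fieldType) (R : algType K) (N n : nat) (x : nat -> R)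
    (sigma delta : nat -> R -> R) (act : ('I_n -> K) -> R -> R)
    (mu : nat -> nat) (y : nat -> R)
    (Hchar : [pchar K] =i pred0)
    (HQNA : is_QNA x N sigma delta act)
    (HGY : is_GY x N act mu y)
    (j : nat) (r w : R) :
  (1 <= j <= N)%N -> inR x j r ->
  (exists t, r * w = y j * t) ->
  ~ (in_ideal x j (y j) r) ->
  exists t, w = y j * t.
Proof.
move=> hj hr [t e] Hnot.
case: HQNA => [HRN [Hore _]].
case: HGY => [_ [_ [_ [_ Hprime]]]].
have hsucc : succ_gt N mu j j.
  rewrite /succ_gt /gy_succ.
  case E: [seq _ <- _ | _] => [|m l] //.
  have : m \in iota j.+1 (N - j).
    by have := mem_head m l; rewrite -E mem_filter => /andP[].
  by rewrite mem_iota => /andP[].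
have hjj : (1 <= j <= j)%N by rewrite leqnn andbT; case/andP: hj.
have [_ Hpr] := (Hprime j hj).1 j hjj hsucc.
case: Hpr => [Hyin [_ [_ [_ [_ Hcp]]]]].
have hj1 : (1 <= j)%N by case/andP: hj.
have hjN : (j <= N)%N by case/andP: hj.
suff main : forall d, (j + d <= N)%N -> forall w t, inR x (j + d)%N w ->
    inR x (j + d)%N t -> r * w = y j * t -> exists2 s, inR x (j + d)%N s & w = y j * s.
  have := main (N - j)%N; rewrite subnKC // => /(_ (leqnn N) w t (HRN w) (HRN t) e).
  by case=> s _ ->; exists s.
elim=> [|d IH] hd w' t' hw ht e'.
  rewrite addn0 in hw ht *.
  have := Hcp r w' hr hw (ex_intro2 _ _ t' ht e').
  by case=> [/Hnot [] | [s hs ->]]; exists s.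
rewrite addnS in hd hw ht *.
set k := (j + d)%N in hd hw ht *.
have IHk := IH (ltnW hd).
have hk1 : (1 <= k.+1 <= N)%N by rewrite hd.
have [_ [_ [_ Hfree]]] := Hore k.+1 hk1.
have hrk : inR x k r by apply: (@inR_monoP _ _ x j) => //; apply: leq_addr.
have hyk : inR x k (y j) by apply: (@inR_monoP _ _ x j) => //; apply: leq_addr.
have Hmul := @inR_mul _ _ x N sigma delta Hore _ (ltnW hd).
move: hw ht e' => /inRS_inv [m [f [hf [hf0 ->]]]] /inRS_inv [m' [g [hg [hg0 ->]]]].
set M := maxn m m'.
rewrite (@padF _ _ _ _ _ _ M _ hf0) ?leq_maxl //.
rewrite (@padF _ _ _ _ _ _ M _ hg0) ?leq_maxr // => e'.
set h := fun i => r * f i - y j * g i.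
have hin : forall i, inR x k (h i).
  by move=> i; apply: inR_add; [|apply: inR_opp]; apply: Hmul.
have hsum : \sum_(i < M) h i * x k.+1 ^+ i = 0.
  apply/eqP; rewrite /h.
  under eq_bigr do rewrite mulrBl.
  rewrite sumrB subr_eq0; apply/eqP.
  move: e'; rewrite !mulr_sumr.
  under eq_bigr do rewrite mulrA.
  by under [in X in _ = X -> _]eq_bigr do rewrite mulrA.
have H0 : forall i, (i < M)%N -> h i = 0.
  have Hs : forall l, (l < size (mkseq h M))%N -> inR x k (mkseq h M)`_l.
    by move=> l; rewrite size_mkseq => hl; rewrite nth_mkseq.
  have Hz : \sum_(l < size (mkseq h M)) (mkseq h M)`_l * x k.+1 ^+ l = 0.
    rewrite size_mkseq -[RHS]hsum; apply: eq_bigr => l _.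
    by rewrite nth_mkseq ?ltn_ord.
  move=> i hi; have := Hfree _ Hs Hz i.
  by rewrite size_mkseq nth_mkseq //; apply.
have Hf : forall i, (i < M)%N -> exists2 s, inR x k s & f i = y j * s.
  move=> i hi; apply: IHk; [exact: hf | exact: hg |].
  by move: (H0 i hi); rewrite /h => /eqP; rewrite subr_eq0 => /eqP.
suff : forall M', (M' <= M)%N -> exists2 s, inR x k.+1 s &
    \sum_(i < M') f i * x k.+1 ^+ i = y j * s.
  by move/(_ M (leqnn M)).
elim=> [|M' IHM] hM.
  by exists 0; [apply: inR0 | rewrite big_ord0 mulr0].
have [s hs es] := IHM (ltnW hM).
have [s' hs' es'] := Hf M' hM.
exists (s + s' * x k.+1 ^+ M').
  by apply: inR_add => //; apply: inR_mon.
by rewrite big_ord_recr /= es es' mulrDr mulrA.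
Qed.
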